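(* Let $k\ge 2$ be an integer, and let $\alpha>1$ and $C>0$ be real numbers. Let $D:=\{z\in\mathbb{C}: |z|<2\}$. Then there exists a sequence $\{f_n\}_n$ of functions holomorphic in $D$ such that $$\frac{|f_n^{(k)}(z)|}{1+|f_n(z)|^\alpha}\le C \qquad\text{for all } z\in D \text{ and all } n,$$ but $\{f_n\}_n$ is not quasi-normal in $D$.
   Context: A family $\mathcal{F}$ of meromorphic functions in a domain $D\subseteq\mathbb{C}$ is called quasi-normal if from each sequence $\{f_n\}_n$ in $\mathcal{F}$ one can extract a subsequence which converges locally uniformly (with respect to the spherical metric, the limit $\infty$ being allowed) on $D\setminus E$, where the set $E$ (which may depend on the sequence) has no accumulation point in $D$. A sequence is called quasi-normal if the family of its members is quasi-normal. *)

(* Defs.v *)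
From Stdlib Require Import Reals.
From Coquelicot Require Import Coquelicot.
Open Scope R_scope.

Definition cdisk (a : C) (r : R) (z : C) : Prop := Cmod (Cminus z a) < r.

Definition Cderiv_at (f : C -> C) (z l : C) : Prop :=
  @is_derive C_AbsRing C_NormedModule f z l.

Definition holomorphic_on (D : C -> Prop) (f : C -> C) : Prop :=
  forall z, D z -> exists l, Cderiv_at f z l.

Definition kth_derivative_on (D : C -> Prop) (k : nat) (f g : C -> C) : Prop :=
  exists h : nat -> C -> C,
    h 0%nat = f /\ h k = g /\
    forall j, (j < k)%nat -> forall z, D z -> Cderiv_at (h j) z (h (S j) z).

(* x ^ a for x >= 0 (with 0 ^ a = 0 for a > 0) *)
Definition rpow (x a : R) : R := if Rle_dec x 0 then 0 else Rpower x a.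

(* Riemann sphere: None = infinity; chordal (spherical) distance *)
Definition Csph := option C.
Definition chordal (u v : Csph) : R :=
  match u, v with
  | Some a, Some b =>
      2 * Cmod (Cminus a b) / sqrt ((1 + Cmod a ^ 2) * (1 + Cmod b ^ 2))
  | Some a, None | None, Some a => 2 / sqrt (1 + Cmod a ^ 2)
  | None, None => 0
  end.

Definition accumulation_point (E : C -> Prop) (z : C) : Prop :=
  forall r, 0 < r -> exists w, E w /\ w <> z /\ cdisk z r w.

Definition no_accumulation_in (E D : C -> Prop) : Prop :=
  forall z, D z -> ~ accumulation_point E z.

(* g_m converges to h locally uniformly w.r.t. the spherical metric on U
   (limit infinity allowed, since h takes values in the Riemann sphere) *)
Definition loc_unif_sph_cvg (U : C -> Prop) (g : nat -> C -> C) (h : C -> Csph) : Prop :=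
  forall z0, U z0 -> exists r, 0 < r /\ (forall z, cdisk z0 r z -> U z) /\
    forall eps, 0 < eps -> exists N, forall m, (N <= m)%nat ->
      forall z, cdisk z0 r z -> chordal (Some (g m z)) (h z) < eps.

Definition quasi_normal_family (F : (C -> C) -> Prop) (D : C -> Prop) : Prop :=
  forall g : nat -> C -> C, (forall m, F (g m)) ->
    exists (phi : nat -> nat) (E : C -> Prop) (h : C -> Csph),
      (forall m, (phi m < phi (S m))%nat) /\
      no_accumulation_in E D /\
      loc_unif_sph_cvg (fun z => D z /\ ~ E z) (fun m => g (phi m)) h.

Definition quasi_normal_seq (f : nat -> C -> C) (D : C -> Prop) : Prop :=
  quasi_normal_family (fun g => exists n, g = f n) D.

(* Main.v *)
Require Import Defs.
From Stdlib Require Import Reals.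
From Coquelicot Require Import Coquelicot.
From Stdlib Require Import Lra Lia List IndefiniteDescription Classical.
Open Scope R_scope.

Definition cexp (z : C) : C := (exp (fst z) * cos (snd z), exp (fst z) * sin (snd z)).

Lemma cexp_plus (a b : C) : cexp (Cplus a b) = Cmult (cexp a) (cexp b).
Proof.
  destruct a as [a1 a2], b as [b1 b2]. unfold cexp, Cplus, Cmult; simpl.
  rewrite exp_plus, cos_plus, sin_plus. f_equal; ring.
Qed.

Lemma cexp_0 : cexp (RtoC 0) = RtoC 1.
Proof. unfold cexp, RtoC; simpl. rewrite exp_0, cos_0, sin_0. f_equal; ring. Qed.



Lemma Cmod_cexp (z : C) : Cmod (cexp z) = exp (fst z).
Proof.
  destruct z as [a b]. unfold Cmod, cexp; cbn [fst snd].
  pose proof (sin2_cos2 b) as H. unfold Rsqr in H.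
  replace ((exp a * cos b) ^ 2 + (exp a * sin b) ^ 2) with ((exp a)^2) by (simpl; nra).
  rewrite sqrt_pow2; [reflexivity|]. left; apply exp_pos.
Qed.

Lemma sin_small (b : R) : 0 <= b <= 1/2 -> b - b^3/6 <= sin b <= b.
Proof.
  intros Hb. destruct (pre_sin_bound b 0) as [H1 H2]; try lra.
  unfold sin_approx in *; simpl in H1, H2.
  unfold sin_term in *; simpl in *.
  split.
  - eapply Rle_trans; [|exact H1]. right. field.
  - eapply Rle_trans; [exact H2|].
    assert (0 <= b^5) by (apply pow_le; lra).
    assert (0 <= b^3) by (apply pow_le; lra).
    assert (b^5 <= b^3).
    { replace (b^5) with (b^3*(b*b)) by ring.
      assert (b^3 * (b*b) <= b^3 * 1) by (apply Rmult_le_compat_l; nra). lra. }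
    unfold Rdiv. repeat rewrite Rmult_1_l. simpl. nra.
Qed.

Lemma sin_bnd (b : R) : Rabs b <= 1/2 -> Rabs (sin b) <= Rabs b /\ Rabs (sin b - b) <= b^2.
Proof.
  intros Hb. destruct (Rle_dec 0 b) as [H0|H0].
  - rewrite (Rabs_pos_eq b H0) in Hb |- *. destruct (sin_small b) as [H1 H2]; [lra|].
    assert (0 <= b^3/6 <= b^2).
    { split. apply Rmult_le_pos; [apply pow_le; lra| lra].
      replace (b^3) with (b^2*b) by ring. assert (0 <= b^2) by (apply pow_le; lra). nra. }
    assert (0 <= sin b) by (assert (b^3/6 <= b) by (simpl in *; nra); lra).
    split; [rewrite Rabs_pos_eq; lra|]. rewrite Rabs_left1; lra.
  - apply Rnot_le_lt in H0. assert (Hn : 0 <= -b) by lra. rewrite (Rabs_left b) in Hb |- * by lra.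
    destruct (sin_small (-b)) as [H1 H2]; [lra|]. rewrite sin_neg in H1, H2.
    assert (0 <= (-b)^3/6 <= b^2).
    { split. apply Rmult_le_pos; [apply pow_le; lra| lra].
      replace ((-b)^3) with (b^2*(-b)) by ring. assert (0 <= b^2) by apply pow2_ge_0.
      assert (b^2 * (-b) <= b^2 * 1) by (apply Rmult_le_compat_l; lra). lra. }
    assert (b^2 <= -b) by (simpl; nra).
    assert (sin b <= 0) by lra.
    split; [rewrite Rabs_left1; lra|]. rewrite Rabs_pos_eq; lra.
Qed.

Lemma cos_bnd (b : R) : Rabs b <= 1/2 -> Rabs (cos b - 1) <= b^2/2.
Proof.
  intros Hb. destruct (pre_cos_bound b 0) as [H1 _].
  { apply Rabs_le_between in Hb. lra. } { apply Rabs_le_between in Hb. lra. }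
  unfold cos_approx in H1. simpl in H1. unfold cos_term in H1. simpl in H1.
  pose proof (COS_bound b).
  rewrite Rabs_left1 by lra. simpl. lra.
Qed.

Lemma exp_bnd (a : R) : Rabs a <= 1/2 -> 0 <= exp a - 1 - a <= 2 * a^2.
Proof.
  intros Ha. apply Rabs_le_between in Ha.
  pose proof (exp_ineq1_le a). pose proof (exp_ineq1_le (-a)).
  pose proof (exp_pos a).
  assert (Hm : exp a * exp (-a) = 1) by (rewrite <- exp_plus; replace (a + - a) with 0 by ring; apply exp_0).
  split; [lra|].
  assert (exp a * (1 - a) <= 1).
  { rewrite <- Hm. apply Rmult_le_compat_l; lra. }
  assert (exp a <= 1 + a + 2 * a^2).
  { assert (Hp : (1-a) * (1 + a + 2*a^2) = 1 + a^2 * (1 - 2*a)) by ring.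
    assert (0 <= a^2 * (1 - 2*a)) by (apply Rmult_le_pos; [apply pow2_ge_0|lra]).
    assert (Hq : 0 <= 1 + a + 2*a^2) by (assert (0 <= a^2) by apply pow2_ge_0; lra).
    assert (exp a <= exp a * ((1-a) * (1 + a + 2*a^2))).
    { rewrite Hp. assert (exp a * 1 <= exp a * (1 + a ^ 2 * (1 - 2 * a))) by (apply Rmult_le_compat_l; lra). lra. }
    assert (exp a * (1-a) * (1 + a + 2*a^2) <= 1 * (1 + a + 2*a^2)) by (apply Rmult_le_compat_r; lra).
    rewrite <- Rmult_assoc in *.
    lra. }
  lra.
Qed.

Lemma Cmod_le_sum (x y : R) : Cmod (x, y) <= Rabs x + Rabs y.
Proof.
  unfold Cmod; cbn [fst snd].
  rewrite <- (sqrt_pow2 (Rabs x + Rabs y)) by (pose proof (Rabs_pos x); pose proof (Rabs_pos y); lra).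
  apply sqrt_le_1_alt.
  assert (Rabs x ^ 2 = x ^ 2) by (simpl; rewrite !Rmult_1_r; rewrite <- Rabs_mult; apply Rabs_pos_eq; nra).
  assert (Rabs y ^ 2 = y ^ 2) by (simpl; rewrite !Rmult_1_r; rewrite <- Rabs_mult; apply Rabs_pos_eq; nra).
  pose proof (Rabs_pos x); pose proof (Rabs_pos y).
  replace ((Rabs x + Rabs y) ^ 2) with (Rabs x ^ 2 + Rabs y ^2 + 2 * Rabs x * Rabs y) by ring.
  nra.
Qed.

Lemma cexp_est (h : C) : Cmod h <= 1/2 -> Cmod (Cminus (Cminus (cexp h) (RtoC 1)) h) <= 3 * Cmod h ^ 2.
Proof.
  intros Hh. destruct h as [a b].
  pose proof (Rmax_Cmod (a,b)) as Hm. cbn [fst snd] in Hm.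
  assert (Ha : Rabs a <= Cmod (a,b)) by (eapply Rle_trans; [apply Rmax_l| exact Hm]).
  assert (Hb : Rabs b <= Cmod (a,b)) by (eapply Rle_trans; [apply Rmax_r| exact Hm]).
  assert (H2 : Cmod (a,b) ^ 2 = a^2 + b^2) by (rewrite Cmod2_alt; reflexivity).
  rewrite H2.
  unfold cexp, Cminus, Cplus, Copp, RtoC; cbn [fst snd].
  eapply Rle_trans; [apply Cmod_le_sum|].
  destruct (exp_bnd a) as [E1 E2]; [lra|].
  pose proof (cos_bnd b ltac:(lra)) as Co.
  destruct (sin_bnd b ltac:(lra)) as [S1 S2].
  assert (Ee : exp a <= 2).
  { assert (exp a <= 1 + a + 2 * a^2) by lra. apply Rabs_le_between in Ha.
    assert (a^2 <= 1/4) by (simpl; nra). lra. }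
  pose proof (exp_pos a).
  assert (R1 : Rabs (exp a * cos b + - (1) + - a) <= 2 * a^2 + b^2).
  { replace (exp a * cos b + - (1) + - a) with ((exp a - 1 - a) + exp a * (cos b - 1)) by ring.
    eapply Rle_trans; [apply Rabs_triang|]. rewrite Rabs_mult.
    rewrite (Rabs_pos_eq (exp a - 1 - a)) by lra. rewrite (Rabs_pos_eq (exp a)) by lra.
    assert (exp a * Rabs (cos b - 1) <= 2 * (b^2/2)).
    { apply Rmult_le_compat; try lra. apply Rabs_pos. }
    lra. }
  assert (R2 : Rabs (exp a * sin b + - (0) + - b) <= a^2 + 2 * b^2).
  { replace (exp a * sin b + - (0) + - b) with ((exp a - 1) * sin b + (sin b - b)) by ring.
    eapply Rle_trans; [apply Rabs_triang|]. rewrite Rabs_mult.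
    assert (Rabs (exp a - 1) <= 2 * Rabs a).
    { apply Rabs_le_between in Ha. apply Rabs_le. assert (a^2 <= Rabs a /2 ).
      { destruct (Rle_dec 0 a). rewrite Rabs_pos_eq by lra. simpl; nra. rewrite Rabs_left by lra. simpl; nra. }
      destruct (Rle_dec 0 a). rewrite Rabs_pos_eq in * by lra. lra. rewrite Rabs_left in * by lra. lra. }
    assert (Rabs (exp a - 1) * Rabs (sin b) <= 2 * Rabs a * Rabs b).
    { apply Rmult_le_compat; try apply Rabs_pos; lra. }
    assert (2 * Rabs a * Rabs b <= a^2 + b^2).
    { assert (Rabs a ^2 = a^2) by (simpl; rewrite !Rmult_1_r, <- Rabs_mult; apply Rabs_pos_eq; nra).
      assert (Rabs b ^2 = b^2) by (simpl; rewrite !Rmult_1_r, <- Rabs_mult; apply Rabs_pos_eq; nra).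
      assert (0 <= (Rabs a - Rabs b)^2) by apply pow2_ge_0. nra. }
    lra. }
  lra.
Qed.

Lemma cexp_deriv0 : @is_derive C_AbsRing C_NormedModule cexp (RtoC 0) (RtoC 1).
Proof.
  split.
  - apply is_linear_scal_l.
  - intros x Hx. apply (is_filter_lim_locally_unique (K:=C_AbsRing) (V := AbsRing_NormedModule C_AbsRing)) in Hx. subst x.
    intros eps. apply (locally_norm_le_locally (K:=C_AbsRing) (V := AbsRing_NormedModule C_AbsRing)).
    assert (Hd : 0 < Rmin (1/2) (eps/3)) by (apply Rmin_case; [lra| destruct eps; simpl; lra]).
    exists (mkposreal _ Hd). intros y Hy. change C in y.
    assert (Hy' : Cmod (Cminus y (RtoC 0)) < Rmin (1/2) (eps/3)) by exact Hy. clear Hy.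
    change (Cmod (Cminus (Cminus (cexp y) (cexp (RtoC 0))) (Cmult (Cminus y (RtoC 0)) (RtoC 1))) <= eps * Cmod (Cminus y (RtoC 0))).
    replace (Cminus y (RtoC 0)) with y in * by ring.
    rewrite cexp_0. replace (Cmult y (RtoC 1)) with y by ring.
    assert (H1 : Cmod y <= 1/2) by (pose proof (Rmin_l (1/2) (eps/3)); simpl in *; lra).
    assert (H2 : Cmod y <= eps/3) by (pose proof (Rmin_r (1/2) (eps/3)); simpl in *; lra).
    eapply Rle_trans; [apply cexp_est; exact H1|].
    pose proof (Cmod_ge_0 y). simpl. rewrite Rmult_1_r.
    assert (Cmod y * Cmod y <= (eps/3) * Cmod y) by (apply Rmult_le_compat_r; lra).
    destruct eps; simpl in *. nra.
Qed.

Definition CD (f : C -> C) (z l : C) : Prop := @is_derive C_AbsRing C_NormedModule f z l.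

Lemma CD_eq f z l l' : CD f z l -> l = l' -> CD f z l'.
Proof. intros H ->. exact H. Qed.

Lemma CD_ext f g z l : (forall t, f t = g t) -> CD f z l -> CD g z l.
Proof. intros H H1. eapply is_derive_ext; eauto. Qed.

Lemma CD_of_abs f z l : @is_derive C_AbsRing (AbsRing_NormedModule C_AbsRing) f z l -> CD f z l.
Proof. unfold CD, is_derive, filterdiff. intros [H1 H2]. split.
 - destruct H1 as [A B [M [HM HN]]]. split; [exact A|exact B|]. exists M. split; [exact HM|]. intros x. exact (HN x).
 - intros x Hx eps. exact (H2 x Hx eps). Qed.

Lemma CD_to_abs f z l : CD f z l -> @is_derive C_AbsRing (AbsRing_NormedModule C_AbsRing) f z l.
Proof. unfold CD, is_derive, filterdiff. intros [H1 H2]. split.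
 - destruct H1 as [A B [M [HM HN]]]. split; [exact A|exact B|]. exists M. split; [exact HM|]. intros x. exact (HN x).
 - intros x Hx eps. exact (H2 x Hx eps). Qed.

Lemma CD_const (a z : C) : CD (fun _ => a) z (RtoC 0).
Proof. eapply CD_eq; [apply (@is_derive_const C_AbsRing C_NormedModule)| reflexivity]. Qed.

Lemma CD_id (z : C) : CD (fun t => t) z (RtoC 1).
Proof. apply CD_of_abs. apply (@is_derive_id C_AbsRing). Qed.

Lemma CD_plus f g z df dg : CD f z df -> CD g z dg -> CD (fun t => Cplus (f t) (g t)) z (Cplus df dg).
Proof. intros H1 H2. apply (@is_derive_plus C_AbsRing C_NormedModule f g z df dg H1 H2). Qed.

Lemma CD_mult f g z df dg : CD f z df -> CD g z dg ->
  CD (fun t => Cmult (f t) (g t)) z (Cplus (Cmult df (g z)) (Cmult (f z) dg)).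
Proof.
  intros H1 H2. apply CD_of_abs. apply (@is_derive_mult C_AbsRing f g z df dg (CD_to_abs _ _ _ H1) (CD_to_abs _ _ _ H2)).
  intros; apply Cmult_comm.
Qed.

Lemma CD_comp f g z df dg : CD f (g z) df -> CD g z dg -> CD (fun t => f (g t)) z (Cmult dg df).
Proof. intros H1 H2. apply (@is_derive_comp C_AbsRing C_NormedModule f g z df dg H1 (CD_to_abs _ _ _ H2)). Qed.

Lemma CD_cexp (z : C) : CD cexp z (cexp z).
Proof.
  assert (E : forall y, Cmult (cexp z) (cexp (Cminus y z)) = cexp y).
  { intros y. rewrite <- cexp_plus. f_equal. ring. }
  assert (Hz : Cminus z z = RtoC 0) by ring.
  eapply CD_ext; [exact E|].
  eapply CD_eq.
  - apply CD_mult; [apply CD_const|].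
    apply (CD_comp cexp (fun y => Cminus y z)).
    + cbv beta. rewrite Hz. apply cexp_deriv0.
    + eapply CD_eq; [apply CD_plus; [apply CD_id| apply CD_const]|]. reflexivity.
  - cbv beta. rewrite Hz. match goal with |- ?a = ?b => change (@eq C a b) end. ring.
Qed.

Ltac Cring := cbv beta; match goal with |- ?a = ?b => change (@eq C a b) end; ring.

Definition ci : C := (0, 1).
Definition csin (w : C) : C := Cmult (Cminus (cexp (Cmult ci w)) (cexp (Copp (Cmult ci w)))) (0, -1/2).
Definition ccos (w : C) : C := Cmult (Cplus (cexp (Cmult ci w)) (cexp (Copp (Cmult ci w)))) (1/2, 0).

Lemma cexp_opp_mul (u : C) : Cmult (cexp u) (cexp (Copp u)) = RtoC 1.
Proof. rewrite <- cexp_plus. replace (Cplus u (Copp u)) with (RtoC 0) by ring. apply cexp_0. Qed.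

Lemma sin2_cos2_C (w : C) : Cplus (Cmult (csin w) (csin w)) (Cmult (ccos w) (ccos w)) = RtoC 1.
Proof.
  unfold csin, ccos. set (a := cexp (Cmult ci w)). set (b := cexp (Copp (Cmult ci w))).
  assert (Hab : Cmult a b = RtoC 1) by apply cexp_opp_mul.
  assert (K1 : Cmult (0, -1/2) (0, -1/2) = (-1/4, 0)) by (unfold Cmult; simpl; f_equal; field).
  assert (K2 : Cmult (1/2, 0) (1/2, 0) = (1/4, 0)) by (unfold Cmult; simpl; f_equal; field).
  transitivity (Cplus (Cmult (Cmult (Cminus a b) (Cminus a b)) (Cmult (0, -1/2) (0, -1/2)))
                      (Cmult (Cmult (Cplus a b) (Cplus a b)) (Cmult (1/2, 0) (1/2, 0)))).
  { Cring. }
  rewrite K1, K2.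
  transitivity (Cmult (Cmult a b) (RtoC 1)).
  { unfold Cminus, Cplus, Cmult, Copp, RtoC. destruct a as [a1 a2], b as [b1 b2]. simpl. f_equal; field. }
  rewrite Hab. Cring.
Qed.

Lemma CD_cexp_lin (c : C) (z : C) : CD (fun t => cexp (Cmult c t)) z (Cmult c (cexp (Cmult c z))).
Proof.
  eapply CD_eq.
  - apply (CD_comp cexp (fun t => Cmult c t)); [apply CD_cexp|].
    eapply CD_eq; [apply CD_mult; [apply CD_const | apply CD_id]|]. reflexivity.
  - cbv beta. Cring.
Qed.

Lemma CD_opp f z l : CD f z l -> CD (fun t => Copp (f t)) z (Copp l).
Proof. intros H. apply (@is_derive_opp C_AbsRing C_NormedModule f z l H). Qed.

Lemma CD_two_exp (p q s k z : C) :
  CD (fun t => Cmult (Cplus (cexp (Cmult p t)) (Cmult s (cexp (Cmult q t)))) k) z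
     (Cmult (Cplus (Cmult p (cexp (Cmult p z))) (Cmult s (Cmult q (cexp (Cmult q z))))) k).
Proof.
  eapply CD_eq.
  - apply CD_mult; [| apply CD_const].
    apply CD_plus; [apply CD_cexp_lin|].
    apply CD_mult; [apply CD_const| apply CD_cexp_lin].
  - Cring.
Qed.

Lemma CD_csin (nu : C) (z : C) : CD (fun t => csin (Cmult nu t)) z (Cmult nu (ccos (Cmult nu z))).
Proof.
  unfold csin, ccos.
  assert (E1 : forall t, Cmult ci (Cmult nu t) = Cmult (Cmult ci nu) t) by (intros; Cring).
  assert (E2 : forall t, Copp (Cmult ci (Cmult nu t)) = Cmult (Copp (Cmult ci nu)) t) by (intros; Cring).
  eapply (CD_ext (fun t => Cmult (Cplus (cexp (Cmult (Cmult ci nu) t)) (Cmult (RtoC (-1)) (cexp (Cmult (Copp (Cmult ci nu)) t)))) (0, -1/2))).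
  { intros t. rewrite E2, E1. Cring. }
  eapply CD_eq; [apply CD_two_exp|].
  rewrite E2, E1.
  set (a := cexp (Cmult (Cmult ci nu) z)). set (b := cexp (Cmult (Copp (Cmult ci nu)) z)).
  assert (Kc : Cmult ci (0, -1/2) = (1/2, 0)) by (unfold ci, Cmult; simpl; f_equal; field).
  transitivity (Cmult nu (Cmult (Cplus a b) (Cmult ci (0, -1/2)))).
  + Cring.
  + rewrite Kc. reflexivity.
Qed.

Lemma CD_ccos (nu : C) (z : C) : CD (fun t => ccos (Cmult nu t)) z (Copp (Cmult nu (csin (Cmult nu z)))).
Proof.
  unfold csin, ccos.
  assert (E1 : forall t, Cmult ci (Cmult nu t) = Cmult (Cmult ci nu) t) by (intros; Cring).
  assert (E2 : forall t, Copp (Cmult ci (Cmult nu t)) = Cmult (Copp (Cmult ci nu)) t) by (intros; Cring).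
  eapply (CD_ext (fun t => Cmult (Cplus (cexp (Cmult (Cmult ci nu) t)) (Cmult (RtoC 1) (cexp (Cmult (Copp (Cmult ci nu)) t)))) (1/2, 0))).
  { intros t. rewrite E2, E1. Cring. }
  eapply CD_eq; [apply CD_two_exp|].
  rewrite E2, E1.
  set (a := cexp (Cmult (Cmult ci nu) z)). set (b := cexp (Cmult (Copp (Cmult ci nu)) z)).
  assert (Kc : Cmult ci (1/2, 0) = Copp (0, -1/2)) by (unfold ci, Cmult, Copp; simpl; f_equal; field).
  transitivity (Cmult nu (Cmult (Cminus a b) (Cmult ci (1/2, 0)))).
  + Cring.
  + rewrite Kc. Cring.
Qed.

Lemma csin_real (x : R) : csin (RtoC x) = RtoC (sin x).
Proof.
  unfold csin, cexp, ci, Cmult, Cminus, Cplus, Copp, RtoC. simpl.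
  replace (0 * x - 1 * 0) with 0 by ring. replace (0 * 0 + 1 * x) with x by ring.
  replace (- 0) with 0 by ring. rewrite exp_0, cos_neg, sin_neg. f_equal; field.
Qed.

Lemma ccos_real (x : R) : ccos (RtoC x) = RtoC (cos x).
Proof.
  unfold ccos, cexp, ci, Cmult, Cminus, Cplus, Copp, RtoC. simpl.
  replace (0 * x - 1 * 0) with 0 by ring. replace (0 * 0 + 1 * x) with x by ring.
  replace (- 0) with 0 by ring. rewrite exp_0, cos_neg, sin_neg. f_equal; field.
Qed.

Lemma Cmod_cexp_le (u : C) : Cmod (cexp u) <= exp (Cmod u).
Proof.
  rewrite Cmod_cexp. pose proof (re_le_Cmod u). unfold Re in H.
  apply exp_le_3 || (destruct (Rle_lt_or_eq_dec _ _ (Rle_trans _ _ _ (RRle_abs _) H)) as [Hl|He];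
    [left; apply exp_increasing; exact Hl| right; rewrite He; reflexivity]).
Qed.

Lemma Cmod_ci (w : C) : Cmod (Cmult ci w) = Cmod w.
Proof.
  rewrite Cmod_mult. replace (Cmod ci) with 1. lra.
  unfold Cmod, ci; simpl. replace (0 * (0 * 1) + 1 * (1 * 1)) with 1 by ring. rewrite sqrt_1; reflexivity.
Qed.

Lemma Cmod_half (a b : R) : (a = 0 /\ (b = 1/2 \/ b = -1/2)) \/ (b = 0 /\ a = 1/2) -> Cmod (a, b) = 1/2.
Proof.
  intros H. unfold Cmod; simpl.
  replace (a * (a * 1) + b * (b * 1)) with ((1/2) * (1/2)) by (destruct H as [[-> [-> | ->]]|[-> ->]]; field).
  rewrite sqrt_square; lra.
Qed.

Lemma Cmod_csin_le (w : C) : Cmod (csin w) <= exp (Cmod w).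
Proof.
  unfold csin. rewrite Cmod_mult. rewrite (Cmod_half 0 (-1/2)) by (left; split; [reflexivity| right; reflexivity]).
  unfold Cminus. eapply Rle_trans. { apply Rmult_le_compat_r; [lra| apply Cmod_triangle]. }
  rewrite Cmod_opp.
  pose proof (Cmod_cexp_le (Cmult ci w)). pose proof (Cmod_cexp_le (Copp (Cmult ci w))).
  rewrite Cmod_opp, Cmod_ci in *. lra.
Qed.

Lemma Cmod_ccos_le (w : C) : Cmod (ccos w) <= exp (Cmod w).
Proof.
  unfold ccos. rewrite Cmod_mult. rewrite (Cmod_half (1/2) 0) by (right; split; reflexivity).
  eapply Rle_trans. { apply Rmult_le_compat_r; [lra| apply Cmod_triangle]. }
  pose proof (Cmod_cexp_le (Cmult ci w)). pose proof (Cmod_cexp_le (Copp (Cmult ci w))).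
  rewrite Cmod_opp, Cmod_ci in *. lra.
Qed.


Fixpoint pev (p : list R) (x : C) : C :=
  match p with nil => RtoC 0 | a :: l => Cplus (RtoC a) (Cmult x (pev l x)) end.
Fixpoint padd (p q : list R) : list R :=
  match p, q with
  | nil, _ => q
  | _, nil => p
  | a :: p', b :: q' => (a + b) :: padd p' q'
  end.
Definition pscal (c : R) (p : list R) : list R := map (Rmult c) p.
Definition pX (p : list R) : list R := 0 :: p.
Fixpoint pderiv (p : list R) : list R :=
  match p with nil => nil | a :: l => padd l (pX (pderiv l)) end.
Definition T1 (p : list R) : list R :=
  padd (padd (pderiv p) (pscal (-1) (pX (pX (pderiv p))))) (pscal (-1) (pX p)).
Fixpoint shift (a : nat) (p : list R) : list R :=
  match a with O => p | S a => pX (shift a p) end.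
Definition coef (p : list R) (d : nat) : R := nth d p 0.

Lemma pev_add p q x : pev (padd p q) x = Cplus (pev p x) (pev q x).
Proof.
  revert q; induction p as [|a p IH]; intros [|b q]; simpl; try Cring.
  rewrite IH. rewrite RtoC_plus. Cring.
Qed.

Lemma pev_scal c p x : pev (pscal c p) x = Cmult (RtoC c) (pev p x).
Proof.
  induction p as [|a p IH]. simpl. Cring. unfold pscal in *. simpl map. simpl pev. rewrite IH. rewrite RtoC_mult. Cring.
Qed.

Lemma pev_X p x : pev (pX p) x = Cmult x (pev p x).
Proof. simpl. Cring. Qed.

Lemma pev_shift a p x : pev (shift a p) x = Cmult (Cpow x a) (pev p x).
Proof. induction a; simpl. Cring. rewrite IHa. Cring. Qed.

Lemma coef_nil d : coef nil d = 0.
Proof. unfold coef; destruct d; reflexivity. Qed.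

Lemma coef_add p q d : coef (padd p q) d = coef p d + coef q d.
Proof.
  revert q d; induction p as [|a p IH]; intros q d.
  - simpl. rewrite coef_nil. ring.
  - destruct q as [|b q].
    + simpl. rewrite coef_nil. ring.
    + destruct d as [|d]; unfold coef; simpl. ring. apply IH.
Qed.

Lemma coef_scal c p d : coef (pscal c p) d = c * coef p d.
Proof.
  unfold coef, pscal. revert d; induction p as [|a p IH]; intros [|d]; simpl; try ring.
  apply IH.
Qed.

Lemma coef_X0 p : coef (pX p) 0 = 0.
Proof. reflexivity. Qed.
Lemma coef_XS p d : coef (pX p) (S d) = coef p d.
Proof. reflexivity. Qed.

Lemma coef_deriv p d : coef (pderiv p) d = INR (S d) * coef p (S d).
Proof.
  revert d; induction p as [|a p IH]; intros d.
  - simpl. rewrite !coef_nil. ring.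
  - simpl pderiv. rewrite coef_add. destruct d as [|d].
    + rewrite coef_X0. unfold coef; simpl. ring.
    + rewrite coef_XS, IH. unfold coef; simpl nth. rewrite !S_INR. ring.
Qed.

Lemma coef_shift_lt a p d : (d < a)%nat -> coef (shift a p) d = 0.
Proof.
  revert d; induction a; intros d Hd; [lia|]. simpl. destruct d. reflexivity.
  rewrite coef_XS. apply IHa. lia.
Qed.

Lemma coef_shift_ge a p d : coef (shift a p) (a + d) = coef p d.
Proof. induction a; simpl. reflexivity. rewrite coef_XS. exact IHa. Qed.

Lemma coef_T1_deriv p d :
  coef (T1 (pderiv p)) d = INR (S d) * INR (S (S d)) * coef p (S (S d)) - INR d * INR d * coef p d.
Proof.
  unfold T1. rewrite !coef_add, !coef_scal.
  rewrite !coef_deriv.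
  destruct d as [|d].
  - rewrite !coef_X0. simpl INR. ring.
  - rewrite !coef_XS. destruct d as [|d].
    + rewrite coef_X0, coef_deriv. simpl INR. ring.
    + rewrite coef_XS, !coef_deriv. rewrite !S_INR. ring.
Qed.

Lemma CD_pev p z : CD (fun t => pev p t) z (pev (pderiv p) z).
Proof.
  induction p as [|a p IH]; simpl.
  - apply CD_const.
  - eapply CD_eq.
    + apply CD_plus; [apply CD_const|]. apply CD_mult; [apply CD_id| exact IH].
    + rewrite pev_add, pev_X. Cring.
Qed.


Fixpoint Pseq (P0 : list R) (j : nat) : list R :=
  match j with O => P0 | S j => if Nat.even j then pderiv (Pseq P0 j) else T1 (Pseq P0 j) end.

Definition Tc (p : nat -> R) (d : nat) : R :=
  INR (S d) * INR (S (S d)) * p (S (S d)) - INR d * INR d * p d.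
Fixpoint Tci (i : nat) (p : nat -> R) : nat -> R :=
  match i with O => p | S i => Tc (Tci i p) end.

Lemma Pseq_even P0 i d : coef (Pseq P0 (2 * i)) d = Tci i (coef P0) d.
Proof.
  revert d; induction i as [|i IH]; intros d. reflexivity.
  replace (2 * S i)%nat with (S (S (2 * i))) by lia.
  assert (E1 : Nat.even (2 * i) = true) by (rewrite Nat.even_mul; reflexivity).
  assert (E2 : Nat.even (S (2 * i)) = false) by (rewrite Nat.even_succ, Nat.odd_mul; reflexivity).
  change (Pseq P0 (S (S (2 * i)))) with (if Nat.even (S (2 * i)) then pderiv (Pseq P0 (S (2 * i))) else T1 (Pseq P0 (S (2 * i)))).
  rewrite E2.
  change (Pseq P0 (S (2 * i))) with (if Nat.even (2 * i) then pderiv (Pseq P0 (2 * i)) else T1 (Pseq P0 (2 * i))).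
  rewrite E1.
  simpl Tci. unfold Tc. rewrite coef_T1_deriv, !IH. reflexivity.
Qed.

Lemma Tci_ext i p q : (forall d, p d = q d) -> forall d, Tci i p d = Tci i q d.
Proof. induction i; intros H d; simpl. apply H. unfold Tc. rewrite !(IHi H). reflexivity. Qed.

Lemma Tci_add i p q d : Tci i (fun e => p e + q e) d = Tci i p d + Tci i q d.
Proof. revert d; induction i; intros d; simpl. reflexivity. unfold Tc. rewrite !IHi. ring. Qed.

Lemma Tci_scal i c p d : Tci i (fun e => c * p e) d = c * Tci i p d.
Proof. revert d; induction i; intros d; simpl. reflexivity. unfold Tc. rewrite !IHi. ring. Qed.

Fixpoint fac (v i : nat) : R :=
  match i with O => 1 | S i => INR (S v) * INR (S (S v)) * fac (S (S v)) i end.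

Lemma Tci_val i : forall v p, (forall e, (e < v + 2 * i)%nat -> p e = 0) ->
  (forall e, (e < v)%nat -> Tci i p e = 0) /\ Tci i p v = fac v i * p (v + 2 * i)%nat.
Proof.
  induction i as [|i IH]; intros v p Hp.
  - simpl. split; [intros e He; apply Hp; lia| rewrite Nat.add_0_r; ring].
  - destruct (IH (S (S v)) p) as [H1 H2]. { intros e He. apply Hp. lia. }
    split.
    + intros e He. simpl. unfold Tc. rewrite !H1 by lia. ring.
    + cbn [Tci fac]. unfold Tc. rewrite H2, (H1 v) by lia.
      replace (S (S v) + 2 * i)%nat with (v + 2 * S i)%nat by lia. ring.
Qed.

Lemma fac_fact v i : fac v i * INR (Factorial.fact v) = INR (Factorial.fact (v + 2 * i)).
Proof.
  revert v; induction i as [|i IH]; intros v.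
  - cbn [fac]. replace (v + 2*0)%nat with v by lia. ring.
  - cbn [fac]. replace (v + 2 * S i)%nat with (S (S v) + 2 * i)%nat by lia. rewrite <- IH.
    replace (Factorial.fact (S (S v))) with ((S (S v)) * ((S v) * Factorial.fact v))%nat by reflexivity.
    rewrite !mult_INR. ring.
Qed.

Lemma Tci_odd i p : (forall e, Nat.even e = true -> p e = 0) ->
  forall e, Nat.even e = true -> Tci i p e = 0.
Proof.
  induction i; intros Hp e He; simpl. apply Hp, He.
  unfold Tc. rewrite !(IHi Hp); auto. ring.
Qed.

Definition ebase (j d : nat) : R := if Nat.eqb d j then 1 else 0.

Lemma Tci_e1 i d : Tci i (ebase 1) d = (-1) ^ i * ebase 1 d.
Proof.
  revert d; induction i; intros d; simpl. ring. unfold Tc. rewrite !IHi.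
  unfold ebase. simpl. destruct d as [|[|d]]; simpl; ring.
Qed.

Definition gam (m : nat) : R := - (-1) ^ m / INR (Factorial.fact (2 * m + 1)).
Definition PhiL (m : nat) (W : list R) : list R := padd (0 :: 1 :: nil) (padd (shift (2 * m + 1) (gam m :: nil)) (shift (4 * m + 1) W)).

Lemma coef_PhiL (m : nat) (W : list R) d : coef (PhiL m W) d = ebase 1 d + (gam m * ebase (2 * m + 1) d + coef (shift (4 * m + 1) W) d).
Proof.
  unfold PhiL. rewrite !coef_add. f_equal.
  - unfold coef, ebase. destruct d as [|[|d]]; simpl; try reflexivity. destruct d; reflexivity.
  - f_equal. destruct (Nat.lt_ge_cases d (2 * m + 1)) as [Hl|Hl].
    + rewrite coef_shift_lt by exact Hl. unfold ebase. destruct (Nat.eqb_spec d (2 * m + 1)); [lia|ring].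
    + replace d with (2 * m + 1 + (d - (2 * m + 1)))%nat by lia. rewrite coef_shift_ge.
      unfold ebase. destruct (d - (2 * m + 1))%nat as [|e] eqn:E.
      * rewrite Nat.add_0_r, Nat.eqb_refl. unfold coef. simpl. ring.
      * replace (Nat.eqb (2 * m + 1 + S e) (2 * m + 1)) with false by (symmetry; apply Nat.eqb_neq; lia).
        unfold coef. simpl. destruct e; ring.
Qed.

Lemma jets_T (m : nat) (Hm : (1 <= m)%nat) (W : list R) : Tci m (coef (PhiL m W)) 0 = 0 /\ Tci m (coef (PhiL m W)) 1 = 0 /\ Tci m (coef (PhiL m W)) 2 = 0.
Proof.
  assert (E : forall d, Tci m (coef (PhiL m W)) d =
     (-1) ^ m * ebase 1 d + (gam m * Tci m (ebase (2 * m + 1)) d + Tci m (coef (shift (4 * m + 1) W)) d)).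
  { intros d. rewrite (Tci_ext m _ _ (coef_PhiL m W)). rewrite Tci_add, Tci_e1, Tci_add, Tci_scal. reflexivity. }
  destruct (Tci_val m 1 (ebase (2 * m + 1))) as [A1 A2].
  { intros e He. unfold ebase. destruct (Nat.eqb_spec e (2 * m + 1)); [lia|reflexivity]. }
  destruct (Tci_val m 3 (coef (shift (4 * m + 1) W))) as [B1 B2].
  { intros e He. apply coef_shift_lt. lia. }
  assert (Od : Tci m (ebase (2 * m + 1)) 2 = 0).
  { apply Tci_odd; [|reflexivity]. intros e He. unfold ebase. destruct (Nat.eqb_spec e (2 * m + 1)); [|reflexivity].
    subst e. rewrite Nat.even_add, Nat.even_mul in He. simpl in He. discriminate. }
  rewrite !E. rewrite !B1 by lia. rewrite (A1 0%nat) by lia. rewrite A2, Od.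
  replace (1 + 2 * m)%nat with (2 * m + 1)%nat by lia.
  assert (Hb : ebase (2*m+1) (2*m+1) = 1) by (unfold ebase; rewrite Nat.eqb_refl; reflexivity).
  rewrite Hb. unfold ebase. simpl Nat.eqb. cbv iota.
  pose proof (fac_fact 1 m) as F. change (INR (Factorial.fact 1)) with 1 in F. rewrite Rmult_1_r in F.
  replace (1 + 2 * m)%nat with (2 * m + 1)%nat in F by lia.
  unfold gam. rewrite <- F.
  assert (0 < fac 1 m).
  { rewrite F. apply lt_0_INR. apply Factorial.lt_O_fact. }
  repeat split; try ring. field. lra.
Qed.

Lemma Pk_zero k W : (2 <= k)%nat ->
  coef (Pseq (PhiL (Nat.div2 k) W) k) 0 = 0 /\ coef (Pseq (PhiL (Nat.div2 k) W) k) 1 = 0.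
Proof.
  intros Hk. destruct (Nat.Even_or_Odd k) as [[m Hm']|[m Hm']]; subst k.
  - rewrite Nat.div2_double. assert (1 <= m)%nat by lia.
    destruct (jets_T m H W) as [J0 [J1 J2]].
    rewrite !Pseq_even. split; assumption.
  - replace (2 * m + 1)%nat with (S (2 * m)) by lia. rewrite Nat.div2_succ_double.
    assert (1 <= m)%nat by lia.
    destruct (jets_T m H W) as [J0 [J1 J2]].
    change (Pseq (PhiL m W) (S (2 * m))) with (if Nat.even (2 * m) then pderiv (Pseq (PhiL m W) (2 * m)) else T1 (Pseq (PhiL m W) (2 * m))).
    replace (Nat.even (2*m)) with true by (rewrite Nat.even_mul; reflexivity). cbv iota.
    rewrite !coef_deriv, !Pseq_even. rewrite J1, J2. split; ring.
Qed.

Lemma pev_factor2 p x : coef p 0 = 0 -> coef p 1 = 0 -> pev p x = Cmult (Cmult x x) (pev (skipn 2 p) x).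
Proof.
  intros H0 H1. destruct p as [|a [|b q]]; simpl.
  - Cring.
  - unfold coef in H0; simpl in H0. subst. Cring.
  - unfold coef in H0, H1; simpl in H0, H1. subst. Cring.
Qed.


Definition Sf (nu : R) (z : C) : C := csin (Cmult (RtoC nu) z).
Definition Cf (nu : R) (z : C) : C := ccos (Cmult (RtoC nu) z).
Definition hfun (nu L : R) (P0 : list R) (j : nat) (z : C) : C :=
  Cmult (RtoC (L * nu ^ j))
    (if Nat.even j then pev (Pseq P0 j) (Sf nu z) else Cmult (Cf nu z) (pev (Pseq P0 j) (Sf nu z))).

Lemma RtoC_Lnu (nu L : R) j : RtoC (L * nu ^ S j) = Cmult (RtoC (L * nu ^ j)) (RtoC nu).
Proof. unfold RtoC, Cmult; simpl. f_equal; ring. Qed.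

Lemma CD_pev_S (nu : R) p z : CD (fun t => pev p (Sf nu t)) z (Cmult (Cmult (RtoC nu) (Cf nu z)) (pev (pderiv p) (Sf nu z))).
Proof.
  apply (CD_comp (fun u => pev p u) (Sf nu)). apply CD_pev. apply CD_csin.
Qed.

Lemma hfun_step (nu L : R) (P0 : list R) j z : CD (hfun nu L P0 j) z (hfun nu L P0 (S j) z).
Proof.
  unfold hfun. destruct (Nat.even j) eqn:Ej.
  - rewrite Nat.even_succ. unfold Nat.odd. rewrite Ej. simpl negb. cbv iota.
    change (Pseq P0 (S j)) with (if Nat.even j then pderiv (Pseq P0 j) else T1 (Pseq P0 j)). rewrite Ej.
    eapply CD_eq. { apply CD_mult; [apply CD_const| apply CD_pev_S]. }
    cbv beta. rewrite RtoC_Lnu. Cring.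
  - rewrite Nat.even_succ. unfold Nat.odd. rewrite Ej. simpl negb. cbv iota.
    change (Pseq P0 (S j)) with (if Nat.even j then pderiv (Pseq P0 j) else T1 (Pseq P0 j)). rewrite Ej.
    eapply CD_eq.
    { apply CD_mult; [apply CD_const|]. apply CD_mult; [apply CD_ccos| apply CD_pev_S]. }
    unfold T1. rewrite !pev_add, !pev_scal, !pev_X.
    pose proof (sin2_cos2_C (Cmult (RtoC nu) z)) as SC. fold (Sf nu z) (Cf nu z) in SC.
    fold (Sf nu z) (Cf nu z).
    set (s := Sf nu z) in *. set (c := Cf nu z) in *.
    assert (Hc : Cmult c c = Cminus (RtoC 1) (Cmult s s)) by (rewrite <- SC; Cring).
    cbv beta. rewrite RtoC_Lnu.
    transitivity (Cmult (Cmult (RtoC (L * nu ^ j)) (RtoC nu))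
       (Cplus (Cmult (Cmult c c) (pev (pderiv (Pseq P0 j)) s)) (Copp (Cmult s (pev (Pseq P0 j) s))))).
    + Cring.
    + rewrite Hc. Cring.
Qed.


Lemma W_exists (m : nat) (c : R) (N : nat) : exists W : list R, forall s : C,
  Cpow (Cplus (RtoC 1) (Cmult (RtoC c) (Cpow s (2 * m)))) N =
  Cplus (Cplus (RtoC 1) (Cmult (RtoC (INR N * c)) (Cpow s (2 * m))))
        (Cmult (Cmult (Cpow s (2 * m)) (Cpow s (2 * m))) (pev W s)).
Proof.
  induction N as [|N [W HW]].
  - exists nil. intros s. replace (INR 0 * c) with 0 by (simpl; ring). cbn [pev]. set (x := Cpow s (2 * m)). simpl Cpow. Cring.
  - exists (padd (INR N * c * c :: nil) (padd W (shift (2 * m) (pscal c W)))).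
    intros s. rewrite Cpow_S, HW. rewrite !pev_add, pev_shift, pev_scal. simpl pev.
    rewrite S_INR. rewrite !RtoC_mult, RtoC_plus. set (x := Cpow s (2 * m)). Cring.
Qed.

Lemma pev_PhiL (m : nat) (c : R) (N : nat) (W : list R) (Hm : (1 <= m)%nat)
  (HN : INR N * c = gam m)
  (HW : forall s : C,
    Cpow (Cplus (RtoC 1) (Cmult (RtoC c) (Cpow s (2 * m)))) N =
    Cplus (Cplus (RtoC 1) (Cmult (RtoC (INR N * c)) (Cpow s (2 * m))))
        (Cmult (Cmult (Cpow s (2 * m)) (Cpow s (2 * m))) (pev W s))) :
  forall s, pev (PhiL m W) s = Cmult s (Cpow (Cplus (RtoC 1) (Cmult (RtoC c) (Cpow s (2 * m)))) N).
Proof.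
  intros s. rewrite HW, HN. unfold PhiL. rewrite !pev_add, !pev_shift. simpl pev.
  replace (4 * m + 1)%nat with (S (2 * m + 2 * m)) by lia.
  replace (2 * m + 1)%nat with (S (2 * m)) by lia.
  rewrite !Cpow_S, Cpow_add_r. set (x := Cpow s (2 * m)). Cring.
Qed.

Lemma Cmod_1_plus_lb (y : C) : Cmod y <= 1/2 -> 1/2 <= Cmod (Cplus (RtoC 1) y).
Proof.
  intros H. pose proof (Cmod_triangle (Cplus (RtoC 1) y) (Copp y)).
  replace (Cplus (Cplus (RtoC 1) y) (Copp y)) with (RtoC 1) in H0 by Cring.
  rewrite Cmod_1, Cmod_opp in H0. lra.
Qed.

Lemma Cmod_1_plus_ub (y : C) : Cmod y <= 1/2 -> Cmod (Cplus (RtoC 1) y) <= 3/2.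
Proof.
  intros H. pose proof (Cmod_triangle (RtoC 1) y). rewrite Cmod_1 in H0. lra.
Qed.

Lemma pow_le_mono (a b : R) (n : nat) : 0 <= a <= b -> a ^ n <= b ^ n.
Proof. intros H. apply pow_incr. exact H. Qed.

Fixpoint pnorm (p : list R) (r : R) : R :=
  match p with nil => 0 | a :: l => Rabs a + r * pnorm l r end.

Lemma pnorm_pos p r : 0 <= r -> 0 <= pnorm p r.
Proof. intros Hr. induction p; simpl. lra. pose proof (Rabs_pos a). nra. Qed.

Lemma pev_bound p s r : 0 <= r -> Cmod s <= r -> Cmod (pev p s) <= pnorm p r.
Proof.
  intros Hr Hs. induction p as [|a p IH]; simpl.
  - rewrite Cmod_0. lra.
  - eapply Rle_trans; [apply Cmod_triangle|]. rewrite Cmod_R, Cmod_mult.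
    pose proof (Cmod_ge_0 s). pose proof (Cmod_ge_0 (pev p s)).
    assert (Cmod s * Cmod (pev p s) <= r * pnorm p r) by (apply Rmult_le_compat; auto).
    lra.
Qed.

Lemma ineq_main (alpha Cb K1 Gm X t : R) : 1 < alpha -> 0 < Cb -> 0 <= K1 -> 1 <= Gm -> 1 <= X ->
  K1 * Gm / Cb <= X -> 0 <= t -> t <= Rpower X (/ (Rmin alpha 2 - 1)) * Gm ->
  K1 * (t * t) / Rpower X (/ (Rmin alpha 2 - 1)) <= Cb * (1 + rpow t alpha).
Proof.
  intros Ha HC HK HG HX HXK Ht0 HtL.
  set (be := Rmin alpha 2) in *.
  assert (Hb1 : 1 < be) by (unfold be; apply Rmin_case; lra).
  assert (Hb2 : be <= 2) by (unfold be; apply Rmin_r).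
  assert (Hb3 : be <= alpha) by (unfold be; apply Rmin_l).
  set (e := / (be - 1)) in *.
  assert (He : 1 <= e).
  { unfold e. rewrite <- Rinv_1. apply Rinv_le_contravar; lra. }
  set (L := Rpower X e) in *.
  assert (HL0 : 0 < L) by (unfold L, Rpower; apply exp_pos).
  assert (HLX : X <= L).
  { unfold L. rewrite <- (Rpower_1 X) at 1 by lra. apply Rle_Rpower; lra. }
  assert (Hrp : 0 <= rpow t alpha).
  { unfold rpow. destruct (Rle_dec t 0). lra. left. unfold Rpower. apply exp_pos. }
  assert (HKX : K1 <= Cb * X).
  { apply (Rmult_le_reg_r (/ Cb)). apply Rinv_0_lt_compat; lra.
    replace (Cb * X * / Cb) with X by (field; lra).
    eapply Rle_trans; [|exact HXK]. unfold Rdiv. apply Rmult_le_compat_r. left; apply Rinv_0_lt_compat; lra. nra. }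
  destruct (Rle_dec t 1) as [Ht1|Ht1].
  - assert (t * t <= 1) by nra.
    assert (K1 * (t * t) <= K1) by nra.
    apply (Rmult_le_reg_r L); [exact HL0|]. unfold Rdiv. rewrite Rmult_assoc, Rinv_l, Rmult_1_r by lra.
    assert (Cb * X <= Cb * (1 + rpow t alpha) * L).
    { assert (Cb * X <= Cb * L) by (apply Rmult_le_compat_l; lra).
      assert (Cb * L <= Cb * (1 + rpow t alpha) * L).
      { rewrite Rmult_comm, (Rmult_comm (Cb * _)). apply Rmult_le_compat_l; [lra|]. nra. }
      lra. }
    lra.
  - apply Rnot_le_lt in Ht1.
    assert (Ht : 0 < t) by lra.
    assert (Hrpa : rpow t alpha = Rpower t alpha).
    { unfold rpow. destruct (Rle_dec t 0); [lra| reflexivity]. }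
    assert (E2 : t * t = Rpower t be * Rpower t (2 - be)).
    { rewrite <- Rpower_plus. replace (be + (2 - be)) with (INR 2) by (simpl; ring).
      rewrite Rpower_pow by lra. ring. }
    assert (B1 : Rpower t (2 - be) <= Rpower (L * Gm) (2 - be)).
    { apply Rle_Rpower_l; [lra|]. split; lra. }
    assert (B2 : Rpower (L * Gm) (2 - be) = Rpower L (2 - be) * Rpower Gm (2 - be)).
    { rewrite Rpower_mult_distr; [reflexivity| lra| lra]. }
    assert (B3 : Rpower Gm (2 - be) <= Gm).
    { rewrite <- (Rpower_1 Gm) at 2 by lra. apply Rle_Rpower; lra. }
    assert (B4 : Rpower L (2 - be) / L = / X).
    { assert (Q1 : Rpower L (2 - be) = Rpower X (e * (2 - be))) by (unfold L; apply Rpower_mult).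
      assert (Q2 : / L = Rpower X (- e)) by (unfold L; rewrite Rpower_Ropp; reflexivity).
      unfold Rdiv. rewrite Q1, Q2, <- Rpower_plus.
      replace (e * (2 - be) + - e) with (Ropp 1).
      - rewrite Rpower_Ropp, Rpower_1 by lra. reflexivity.
      - unfold e. field. lra. }
    assert (B5 : Rpower t be <= Rpower t alpha) by (apply Rle_Rpower; lra).
    assert (P1 : 0 < Rpower t be) by (unfold Rpower; apply exp_pos).
    assert (P2 : 0 < Rpower L (2 - be)) by (unfold Rpower; apply exp_pos).
    assert (P3 : 0 < Rpower Gm (2 - be)) by (unfold Rpower; apply exp_pos).
    rewrite E2.
    assert (K1 * (Rpower t be * Rpower t (2 - be)) / L <= K1 * Rpower t be * Gm * (Rpower L (2 - be) / L)).
    { unfold Rdiv. rewrite Rmult_assoc.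
      replace (K1 * Rpower t be * Gm * (Rpower L (2 - be) * / L)) with (K1 * ((Rpower t be * (Gm * Rpower L (2 - be))) * / L)) by ring.
      apply Rmult_le_compat_l; [lra|]. apply Rmult_le_compat_r; [left; apply Rinv_0_lt_compat; lra|].
      apply Rmult_le_compat_l; [lra|]. rewrite B2 in B1. nra. }
    rewrite B4 in H.
    assert (K1 * Rpower t be * Gm * / X <= Cb * Rpower t be).
    { apply (Rmult_le_reg_r X); [lra|]. rewrite Rmult_assoc, Rinv_l, Rmult_1_r by lra.
      replace (K1 * Rpower t be * Gm) with (K1 * Gm * Rpower t be) by ring.
      replace (Cb * Rpower t be * X) with ((Cb * X) * Rpower t be) by ring.
      apply Rmult_le_compat_r; [lra|].
      apply (Rmult_le_reg_r (/ Cb)). apply Rinv_0_lt_compat; lra.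
      replace (Cb * X * / Cb) with X by (field; lra). exact HXK. }
    rewrite Hrpa. nra.
Qed.


Lemma Sf_bound nu z : 0 <= nu -> Cmod z < 2 -> Cmod (Sf nu z) <= exp (2 * nu) /\ Cmod (Cf nu z) <= exp (2 * nu).
Proof.
  intros Hnu Hz. unfold Sf, Cf.
  assert (H : exp (Cmod (Cmult (RtoC nu) z)) <= exp (2 * nu)).
  { rewrite Cmod_mult, Cmod_R, Rabs_pos_eq by lra.
    destruct (Req_dec nu 0) as [E|E]. subst. right. f_equal. ring.
    left. apply exp_increasing. assert (0 < nu) by (destruct Hnu; [auto| congruence]). pose proof (Cmod_ge_0 z). nra. }
  split; eapply Rle_trans; [apply Cmod_csin_le| exact H| apply Cmod_ccos_le| exact H].
Qed.

Lemma Sf_real nu x : Sf nu (RtoC x) = RtoC (sin (nu * x)).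
Proof. unfold Sf. rewrite <- RtoC_mult. apply csin_real. Qed.

Lemma gam_bound m : Rabs (gam m) <= 1.
Proof.
  unfold gam. unfold Rdiv. rewrite Rabs_mult, Rabs_Ropp, <- RPow_abs, Rabs_m1, pow1, Rmult_1_l.
  assert (H : 1 <= INR (Factorial.fact (2 * m + 1))).
  { apply (le_INR 1). apply Factorial.lt_O_fact. }
  rewrite Rabs_Rinv by lra. rewrite Rabs_pos_eq by lra.
  rewrite <- Rinv_1. apply Rinv_le_contravar; lra.
Qed.

Lemma per_n (k : nat) (alpha Cb : R) (Hk : (2 <= k)%nat) (Ha : 1 < alpha) (HC : 0 < Cb)
  (nu : R) (Hnu : 1 <= nu) :
  exists F FK : C -> C,
    kth_derivative_on (cdisk 0 2) k F FK /\
    (forall z, cdisk 0 2 z -> Cmod (FK z) / (1 + rpow (Cmod (F z)) alpha) <= Cb) /\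
    (forall x : R, sin (nu * x) = 0 -> F (RtoC x) = RtoC 0) /\
    (forall x : R, Rabs (sin (nu * x)) = 1 -> 10 <= Cmod (F (RtoC x))).
Proof.
  set (m := Nat.div2 k).
  assert (Hm : (1 <= m)%nat).
  { unfold m. destruct (Nat.Even_or_Odd k) as [[j Hj]|[j Hj]]; subst k.
    rewrite Nat.div2_double; lia. replace (2 * j + 1)%nat with (S (2 * j)) by lia. rewrite Nat.div2_succ_double; lia. }
  set (Rr := exp (2 * nu)).
  assert (HR : 1 <= Rr) by (unfold Rr; rewrite <- exp_0; left; apply exp_increasing; lra).
  destruct (INR_unbounded (2 * Rr ^ (2 * m) + 1)) as [N HN].
  assert (HRp : 1 <= Rr ^ (2 * m)) by (apply pow_R1_Rle; lra).
  assert (HN0 : 0 < INR N) by lra.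
  set (c := gam m / INR N).
  assert (Hc : INR N * c = gam m) by (unfold c; field; lra).
  assert (Hcb : Rabs c * Rr ^ (2 * m) <= 1/2).
  { unfold c, Rdiv. rewrite Rabs_mult, Rabs_Rinv, (Rabs_pos_eq (INR N)) by lra.
    pose proof (gam_bound m). pose proof (Rabs_pos (gam m)).
    apply (Rmult_le_reg_r (INR N)); [lra|].
    replace (Rabs (gam m) * / INR N * Rr ^ (2 * m) * INR N) with (Rabs (gam m) * Rr ^ (2 * m)) by (field; lra).
    nra. }
  destruct (W_exists m c N) as [W HW].
  set (P0 := PhiL m W).
  assert (HP0 : forall s, pev P0 s = Cmult s (Cpow (Cplus (RtoC 1) (Cmult (RtoC c) (Cpow s (2 * m)))) N)).
  { apply pev_PhiL; try assumption. }
  set (Q := skipn 2 (Pseq P0 k)).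
  destruct (Pk_zero k W Hk) as [Z0 Z1]. fold m P0 in Z0, Z1.
  assert (HQ : forall s, pev (Pseq P0 k) s = Cmult (Cmult s s) (pev Q s)).
  { intros s. apply pev_factor2; assumption. }
  set (u0 := (1/2) ^ N).
  assert (Hu0 : 0 < u0) by (unfold u0; apply pow_lt; lra).
  set (Gm := Rr * (3/2) ^ N).
  assert (HGm : 1 <= Gm).
  { unfold Gm. assert (1 <= (3/2)^N) by (apply pow_R1_Rle; lra). nra. }
  set (A := nu ^ k * Rr * pnorm Q Rr).
  assert (HA : 0 <= A).
  { unfold A. apply Rmult_le_pos. apply Rmult_le_pos. apply pow_le; lra. lra. apply pnorm_pos; lra. }
  set (K1 := A / (u0 * u0)).
  assert (HK1 : 0 <= K1) by (unfold K1; apply Rmult_le_pos; [lra| left; apply Rinv_0_lt_compat; nra]).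
  set (X := 12 * 2 ^ N + K1 * Gm / Cb).
  assert (HX1 : 1 <= X).
  { unfold X. assert (1 <= 2 ^ N) by (apply pow_R1_Rle; lra).
    assert (0 <= K1 * Gm / Cb) by (apply Rmult_le_pos; [nra| left; apply Rinv_0_lt_compat; lra]). lra. }
  assert (HXK : K1 * Gm / Cb <= X).
  { unfold X. assert (0 <= 2 ^ N) by (apply pow_le; lra). lra. }
  set (L := Rpower X (/ (Rmin alpha 2 - 1))).
  assert (HLX : X <= L).
  { unfold L. rewrite <- (Rpower_1 X) at 1 by lra. apply Rle_Rpower; [lra|].
    assert (1 < Rmin alpha 2) by (apply Rmin_case; lra).
    assert (Rmin alpha 2 <= 2) by apply Rmin_r.
    rewrite <- Rinv_1. apply Rinv_le_contravar; lra. }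
  assert (HL0 : 0 < L) by lra.
  assert (Ubnd : forall s, Cmod s <= Rr ->
     u0 <= Cmod (Cpow (Cplus (RtoC 1) (Cmult (RtoC c) (Cpow s (2 * m)))) N) <= (3/2) ^ N).
  { intros s Hs. rewrite Cmod_pow.
    assert (Hy : Cmod (Cmult (RtoC c) (Cpow s (2 * m))) <= 1/2).
    { rewrite Cmod_mult, Cmod_R, Cmod_pow.
      assert (Cmod s ^ (2 * m) <= Rr ^ (2 * m)) by (apply pow_incr; split; [apply Cmod_ge_0| lra]).
      pose proof (Rabs_pos c). nra. }
    split.
    - unfold u0. apply pow_incr. split; [lra|]. apply Cmod_1_plus_lb, Hy.
    - apply pow_incr. split; [apply Cmod_ge_0|]. apply Cmod_1_plus_ub, Hy. }
  exists (hfun nu L P0 0), (hfun nu L P0 k).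
  assert (HF : forall z, hfun nu L P0 0 z = Cmult (RtoC L) (pev P0 (Sf nu z))).
  { intros z. unfold hfun. simpl Nat.even. cbv iota. simpl Pseq. f_equal. f_equal. ring. }
  split; [|split; [|split]].
  - exists (hfun nu L P0). split; [reflexivity|]. split; [reflexivity|].
    intros j _ z _. apply hfun_step.
  - intros z Hz. unfold cdisk in Hz. replace (Cminus z (RtoC 0)) with z in Hz by Cring.
    destruct (Sf_bound nu z ltac:(lra) Hz) as [HS HCf].
    set (s := Sf nu z) in *.
    set (t := Cmod (hfun nu L P0 0 z)).
    assert (Ht : t = L * (Cmod s * Cmod (Cpow (Cplus (RtoC 1) (Cmult (RtoC c) (Cpow s (2 * m)))) N))).
    { unfold t. rewrite HF, Cmod_mult, Cmod_R, Rabs_pos_eq by lra. fold s. rewrite HP0, Cmod_mult. reflexivity. }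
    destruct (Ubnd s HS) as [U1 U2].
    assert (Hs_t : Cmod s <= t / (L * u0)).
    { rewrite Ht. apply (Rmult_le_reg_r (L * u0)); [nra|].
      unfold Rdiv. rewrite Rmult_assoc, Rinv_l, Rmult_1_r by nra.
      pose proof (Cmod_ge_0 s).
      assert (L * Cmod s * u0 <= L * Cmod s * Cmod (Cpow (Cplus (RtoC 1) (Cmult (RtoC c) (Cpow s (2 * m)))) N))
        by (apply Rmult_le_compat_l; [nra| lra]).
      lra. }
    assert (Ht0 : 0 <= t) by apply Cmod_ge_0.
    assert (HtL : t <= L * Gm).
    { rewrite Ht. unfold Gm. pose proof (Cmod_ge_0 s).
      assert (Cmod s * Cmod (Cpow (Cplus (RtoC 1) (Cmult (RtoC c) (Cpow s (2 * m)))) N) <= Rr * (3/2)^N)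
        by (apply Rmult_le_compat; auto; apply Cmod_ge_0).
      nra. }
    assert (HFK : Cmod (hfun nu L P0 k z) <= L * A * (Cmod s * Cmod s)).
    { unfold hfun. fold s. rewrite Cmod_mult, Cmod_R, Rabs_mult, (Rabs_pos_eq L) by lra.
      rewrite (Rabs_pos_eq (nu ^ k)) by (apply pow_le; lra).
      assert (HQb : Cmod (pev (Pseq P0 k) s) <= Cmod s * Cmod s * pnorm Q Rr).
      { rewrite HQ, !Cmod_mult. pose proof (pev_bound Q s Rr ltac:(lra) HS).
        pose proof (Cmod_ge_0 s). apply Rmult_le_compat_l; [nra| exact H]. }
      assert (Hnk : 0 <= nu ^ k) by (apply pow_le; lra).
      pose proof (Cmod_ge_0 s). pose proof (pnorm_pos Q Rr ltac:(lra)).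
      unfold A. destruct (Nat.even k).
      - assert (Cmod (pev (Pseq P0 k) s) <= Rr * (Cmod s * Cmod s * pnorm Q Rr)).
        { assert (0 <= Cmod s * Cmod s * pnorm Q Rr) by (apply Rmult_le_pos; nra).
          nra. }
        assert (nu ^ k * Cmod (pev (Pseq P0 k) s) <= nu ^ k * (Rr * (Cmod s * Cmod s * pnorm Q Rr)))
          by (apply Rmult_le_compat_l; lra).
        assert (L * (nu ^ k * Cmod (pev (Pseq P0 k) s)) <= L * (nu ^ k * (Rr * (Cmod s * Cmod s * pnorm Q Rr))))
          by (apply Rmult_le_compat_l; lra).
        nra.
      - rewrite Cmod_mult.
        assert (Cmod (Cf nu z) * Cmod (pev (Pseq P0 k) s) <= Rr * (Cmod s * Cmod s * pnorm Q Rr)).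
        { apply Rmult_le_compat; auto; apply Cmod_ge_0. }
        assert (nu ^ k * (Cmod (Cf nu z) * Cmod (pev (Pseq P0 k) s)) <= nu ^ k * (Rr * (Cmod s * Cmod s * pnorm Q Rr)))
          by (apply Rmult_le_compat_l; lra).
        assert (L * (nu ^ k * (Cmod (Cf nu z) * Cmod (pev (Pseq P0 k) s))) <= L * (nu ^ k * (Rr * (Cmod s * Cmod s * pnorm Q Rr))))
          by (apply Rmult_le_compat_l; lra).
        nra. }
    assert (HFK2 : Cmod (hfun nu L P0 k z) <= K1 * (t * t) / L).
    { eapply Rle_trans; [exact HFK|].
      assert (Cmod s * Cmod s <= (t / (L * u0)) * (t / (L * u0))).
      { pose proof (Cmod_ge_0 s). apply Rmult_le_compat; auto. }
      assert (L * A * (Cmod s * Cmod s) <= L * A * ((t / (L * u0)) * (t / (L * u0)))).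
      { apply Rmult_le_compat_l; [nra| exact H]. }
      eapply Rle_trans; [exact H0|]. right. unfold K1. field. split; lra. }
    pose proof (ineq_main alpha Cb K1 Gm X t Ha HC HK1 HGm HX1 HXK Ht0 HtL) as IM. fold L in IM.
    assert (Hden : 0 < 1 + rpow t alpha).
    { unfold rpow. destruct (Rle_dec t 0). lra. assert (0 < Rpower t alpha) by (unfold Rpower; apply exp_pos). lra. }
    apply (Rmult_le_reg_r (1 + rpow t alpha)); [exact Hden|].
    unfold Rdiv. rewrite Rmult_assoc, Rinv_l, Rmult_1_r by lra. fold t. lra.
  - intros x Hx. rewrite HF, Sf_real, Hx, HP0. Cring.
  - intros x Hx. rewrite HF, Cmod_mult, Cmod_R, Rabs_pos_eq by lra.
    rewrite Sf_real, HP0, Cmod_mult, Cmod_R, Hx.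
    destruct (Ubnd (RtoC (sin (nu * x)))) as [U1 U2].
    { rewrite Cmod_R, Hx. lra. }
    assert (L * u0 >= 12).
    { assert (X * u0 >= 12).
      { unfold X, u0. assert (0 <= K1 * Gm / Cb) by (apply Rmult_le_pos; [nra| left; apply Rinv_0_lt_compat; lra]).
        assert (0 < (1/2) ^ N) by (apply pow_lt; lra).
        assert (2 ^ N * (1/2) ^ N = 1) by (rewrite <- Rpow_mult_distr; replace (2 * (1/2)) with 1 by field; apply pow1).
        nra. }
      nra. }
    nra.
Qed.


Definition nuN (n : nat) : nat := (2 ^ n * Factorial.fact (S n))%nat.

Lemma fact_div n q : (1 <= q <= n)%nat -> Nat.divide q (Factorial.fact n).
Proof.
  induction n as [|n IH]; intros Hq; [lia|].
  simpl Factorial.fact. destruct (Nat.eq_dec q (S n)) as [E|E].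
  - subst. exists (Factorial.fact n). lia.
  - apply Nat.divide_add_r.
    + apply IH; lia.
    + apply Nat.divide_mul_r. apply IH; lia.
Qed.

Lemma fact_fact_div a b : (a <= b)%nat -> Nat.divide (Factorial.fact a) (Factorial.fact b).
Proof.
  intros H. induction H. apply Nat.divide_refl.
  simpl Factorial.fact. apply Nat.divide_add_r; [exact IHle| apply Nat.divide_mul_r; exact IHle].
Qed.

Lemma nuN_div_q n q : (1 <= q <= S n)%nat -> Nat.divide q (nuN n).
Proof. intros H. unfold nuN. apply Nat.divide_mul_r. apply fact_div. exact H. Qed.


Lemma nuN_div2 n' n : (n' < n)%nat -> Nat.divide (2 * nuN n') (nuN n).
Proof.
  intros H. unfold nuN. rewrite Nat.mul_assoc.
  destruct (fact_fact_div (S n') (S n)) as [j Hj]; [lia|].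
  exists (2 ^ (n - S n') * j)%nat. rewrite Hj.
  replace n with (S n' + (n - S n'))%nat at 1 by lia.
  rewrite Nat.pow_add_r. simpl Nat.pow. ring.
Qed.

Lemma nuN_ge n : (S n <= nuN n)%nat.
Proof.
  unfold nuN. assert (1 <= 2 ^ n)%nat by (apply Nat.le_succ_l, Nat.neq_0_lt_0, Nat.pow_nonzero; lia).
  assert (S n <= Factorial.fact (S n))%nat.
  { simpl Factorial.fact. pose proof (Factorial.lt_O_fact n). nia. }
  nia.
Qed.

Lemma sin_nat_PI j : sin (INR j * PI) = 0 /\ Rabs (cos (INR j * PI)) = 1.
Proof.
  induction j as [|j [IH1 IH2]].
  - simpl. rewrite Rmult_0_l, sin_0, cos_0, Rabs_R1. split; reflexivity.
  - rewrite S_INR. replace ((INR j + 1) * PI) with (INR j * PI + PI) by ring.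
    rewrite neg_sin, neg_cos, IH1, Rabs_Ropp. split; [ring| exact IH2].
Qed.

Lemma chordal_sqrt_le x y : 0 <= x -> 0 <= y -> sqrt ((1 + x ^ 2) * (1 + y ^ 2)) <= (1 + x) * (1 + y).
Proof.
  intros Hx Hy. rewrite <- (sqrt_square ((1 + x) * (1 + y))) by nra.
  apply sqrt_le_1_alt. nra.
Qed.

Lemma chordal_contra (v : C) (hz : Csph) :
  chordal (Some (RtoC 0)) hz < 1/2 -> chordal (Some v) hz < 1/2 -> Cmod v < 1.
Proof.
  intros H1 H2. destruct hz as [b|].
  - simpl in H1, H2. rewrite Cmod_0 in H1.
    set (B := Cmod b) in *. set (V := Cmod v) in *.
    assert (HB : 0 <= B) by apply Cmod_ge_0. assert (HV : 0 <= V) by apply Cmod_ge_0.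
    replace (Cmod (Cminus (RtoC 0) b)) with B in H1 by (unfold B; rewrite <- Cmod_opp; f_equal; Cring).
    pose proof (chordal_sqrt_le 0 B ltac:(lra) HB) as S1.
    pose proof (chordal_sqrt_le V B HV HB) as S2.
    assert (P1 : 0 < sqrt ((1 + 0 ^ 2) * (1 + B ^ 2))) by (apply sqrt_lt_R0; nra).
    assert (P2 : 0 < sqrt ((1 + V ^ 2) * (1 + B ^ 2))) by (apply sqrt_lt_R0; nra).
    assert (HB3 : B < 1/3).
    { apply (Rmult_lt_compat_r (sqrt ((1 + 0 ^ 2) * (1 + B ^ 2)))) in H1; [|exact P1].
      unfold Rdiv in H1. rewrite Rmult_assoc, Rinv_l, Rmult_1_r in H1 by lra. nra. }
    assert (Htri : V - B <= Cmod (Cminus v b)).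
    { pose proof (Cmod_triangle (Cminus v b) b). replace (Cplus (Cminus v b) b) with v in H by Cring. fold V B in H. lra. }
    apply (Rmult_lt_compat_r (sqrt ((1 + V ^ 2) * (1 + B ^ 2)))) in H2; [|exact P2].
    unfold Rdiv in H2. rewrite Rmult_assoc, Rinv_l, Rmult_1_r in H2 by lra.
    nra.
  - simpl in H1. rewrite Cmod_0 in H1.
    replace (1 + 0 * (0 * 1)) with 1 in H1 by ring. rewrite sqrt_1 in H1. lra.
Qed.

Lemma phi_ge (phi : nat -> nat) : (forall m, (phi m < phi (S m))%nat) -> forall m, (m <= phi m)%nat.
Proof. intros H m. induction m. lia. specialize (H m). lia. Qed.

Lemma RtoC_inj a b : RtoC a = RtoC b -> a = b.
Proof. intros H. apply (f_equal fst) in H. exact H. Qed.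

Lemma Cmod_RtoC_diff (a b : R) : Cmod (Cminus (RtoC a) (RtoC b)) = Rabs (a - b).
Proof. rewrite <- Cmod_R. f_equal. unfold Cminus, Cplus, Copp, RtoC. simpl. f_equal; ring. Qed.


Lemma exists_good_q (E : C -> Prop) : no_accumulation_in E (cdisk 0 2) ->
  exists q : nat, (3 <= q)%nat /\ ~ E (RtoC (PI / INR q)).
Proof.
  intros Hacc. apply NNPP. intros Hn.
  apply (Hacc (RtoC 0)).
  { unfold cdisk. replace (Cminus (RtoC 0) (RtoC 0)) with (RtoC 0) by Cring. rewrite Cmod_0. lra. }
  intros r Hr. destruct (INR_unbounded (PI / r)) as [q Hq].
  set (q' := (q + 3)%nat).
  assert (Hq' : INR q' > PI / r) by (unfold q'; rewrite plus_INR; simpl; lra).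
  assert (Hq'0 : 0 < INR q') by (unfold q'; rewrite plus_INR; pose proof (pos_INR q); simpl; lra).
  pose proof PI_RGT_0.
  exists (RtoC (PI / INR q')). split; [|split].
  - apply NNPP. intros HE. apply Hn. exists q'. split; [unfold q'; lia| exact HE].
  - intros Heq. apply RtoC_inj in Heq. assert (0 < PI / INR q') by (apply Rdiv_lt_0_compat; lra). lra.
  - unfold cdisk. rewrite Cmod_RtoC_diff. rewrite Rminus_0_r.
    assert (0 < PI / INR q') by (apply Rdiv_lt_0_compat; lra).
    rewrite Rabs_pos_eq by lra.
    apply (Rmult_lt_reg_r (INR q')); [lra|]. unfold Rdiv. rewrite Rmult_assoc, Rinv_l, Rmult_1_r by lra.
    unfold Rdiv in Hq'. apply (Rmult_lt_compat_l r) in Hq'; [|lra].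
    rewrite <- Rmult_assoc, (Rmult_comm r PI), Rmult_assoc, Rinv_r, Rmult_1_r in Hq' by lra. lra.
Qed.

Theorem mainTheorem2 (k : nat) (alpha Cb : R) :
  (2 <= k)%nat -> 1 < alpha -> 0 < Cb ->
  exists (f : nat -> C -> C) (fk : nat -> C -> C),
    (forall n, holomorphic_on (cdisk 0 2) (f n)) /\
    (forall n, kth_derivative_on (cdisk 0 2) k (f n) (fk n)) /\
    (forall n z, cdisk 0 2 z ->
       Cmod (fk n z) / (1 + rpow (Cmod (f n z)) alpha) <= Cb) /\
    ~ quasi_normal_seq f (cdisk 0 2).
Proof.
  intros Hk Ha HC.
  assert (H : forall n, exists p : (C -> C) * (C -> C),
    kth_derivative_on (cdisk 0 2) k (fst p) (snd p) /\
    (forall z, cdisk 0 2 z -> Cmod (snd p z) / (1 + rpow (Cmod (fst p z)) alpha) <= Cb) /\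
    (forall x : R, sin (INR (nuN n) * x) = 0 -> fst p (RtoC x) = RtoC 0) /\
    (forall x : R, Rabs (sin (INR (nuN n) * x)) = 1 -> 10 <= Cmod (fst p (RtoC x)))).
  { intros n. destruct (per_n k alpha Cb Hk Ha HC (INR (nuN n))) as [F [FK HP]].
    { apply (le_INR 1). pose proof (nuN_ge n). lia. }
    exists (F, FK). exact HP. }
  set (sel := fun n => proj1_sig (constructive_indefinite_description _ (H n))).
  assert (Hsel : forall n, _) by (intros n; exact (proj2_sig (constructive_indefinite_description _ (H n)))).
  exists (fun n => fst (sel n)), (fun n => snd (sel n)).
  assert (Hkth : forall n, kth_derivative_on (cdisk 0 2) k (fst (sel n)) (snd (sel n))).
  { intros n. apply (Hsel n). }
  split; [|split; [exact Hkth| split]].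
  - intros n z Hz. destruct (Hkth n) as [h [H0 [_ Hd]]].
    exists (h 1%nat z). rewrite <- H0. apply Hd; [lia| exact Hz].
  - intros n z Hz. apply (Hsel n). exact Hz.
  - intros QN.
    destruct (QN (fun n => fst (sel n))) as [phi [E [h [Hinc [Hacc Hcv]]]]].
    { intros m. exists m. reflexivity. }
    destruct (exists_good_q E Hacc) as [q [Hq3 HqE]].
    set (a := RtoC (PI / INR q)).
    assert (Hq0 : 0 < INR q) by (apply lt_0_INR; lia).
    assert (Hq3' : 3 <= INR q) by (replace 3 with (INR 3) by (simpl; lra); apply le_INR; lia).
    pose proof PI_RGT_0 as HPI. pose proof PI_4 as HPI4.
    assert (Hpq : 0 < PI / INR q) by (apply Rdiv_lt_0_compat; lra).
    assert (Da : cdisk 0 2 a).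
    { unfold cdisk, a. rewrite Cmod_RtoC_diff, Rminus_0_r, Rabs_pos_eq by lra.
      apply (Rmult_lt_reg_r (INR q)); [lra|]. unfold Rdiv. rewrite Rmult_assoc, Rinv_l, Rmult_1_r by lra. lra. }
    destruct (Hcv a (conj Da HqE)) as [r [Hr [_ Hunif]]].
    destruct (Hunif (1/2) ltac:(lra)) as [N0 HN0].
    destruct (INR_unbounded (PI / (2 * r))) as [M HM].
    set (m' := (N0 + q + M)%nat).
    set (n' := phi m'). set (n := phi (S m')).
    assert (Hm'n' : (m' <= n')%nat) by (apply phi_ge; exact Hinc).
    assert (Hnn : (n' < n)%nat) by (apply Hinc).
    set (nu' := INR (nuN n')).
    assert (Hnu'M : INR M < nu').
    { unfold nu'. apply lt_INR. pose proof (nuN_ge n'). unfold m' in Hm'n'. lia. }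
    assert (Hnu'0 : 0 < nu') by (pose proof (pos_INR M); lra).
    set (x := PI / INR q + PI / (2 * nu')).
    assert (Hz : cdisk a r (RtoC x)).
    { unfold cdisk, a, x. rewrite Cmod_RtoC_diff.
      replace (PI / INR q + PI / (2 * nu') - PI / INR q) with (PI / (2 * nu')) by ring.
      assert (0 < PI / (2 * nu')) by (apply Rdiv_lt_0_compat; lra).
      rewrite Rabs_pos_eq by lra.
      assert (PI / (2 * r) < nu') by lra.
      apply (Rmult_lt_reg_r (2 * nu')); [lra|]. unfold Rdiv. rewrite Rmult_assoc, Rinv_l, Rmult_1_r by lra.
      unfold Rdiv in H1. apply (Rmult_lt_compat_r (2 * r)) in H1; [|lra].
      rewrite Rmult_assoc, Rinv_l, Rmult_1_r in H1 by lra. lra. }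
    assert (Zn : fst (sel n) (RtoC x) = RtoC 0).
    { apply (Hsel n). 
      destruct (nuN_div_q n q) as [j1 Hj1]. { unfold m' in Hm'n'. lia. }
      destruct (nuN_div2 n' n Hnn) as [j2 Hj2].
      assert (E1 : INR (nuN n) * x = INR (j1 + j2) * PI).
      { unfold x. rewrite plus_INR.
        transitivity (INR (nuN n) * (PI / INR q) + INR (nuN n) * (PI / (2 * nu'))); [ring|].
        assert (Hq_ne : INR q <> 0) by lra.
        assert (Hnu_ne : INR (nuN n') <> 0) by (unfold nu' in Hnu'0; lra).
        rewrite Hj1 at 1. rewrite Hj2. rewrite !mult_INR. unfold nu'. simpl (INR 2).
        field. repeat split; auto; lra. }
      rewrite E1. apply sin_nat_PI. }
    assert (Bn' : 10 <= Cmod (fst (sel n') (RtoC x))).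
    { apply (Hsel n').
      destruct (nuN_div_q n' q) as [j Hj]. { unfold m' in Hm'n'. lia. }
      assert (E1 : INR (nuN n') * x = INR j * PI + PI / 2).
      { unfold x. fold nu'.
        transitivity (nu' * (PI / INR q) + nu' * (PI / (2 * nu'))); [ring|].
        assert (Hq_ne : INR q <> 0) by lra.
        unfold nu' at 1. rewrite Hj, mult_INR. field. repeat split; auto; lra. }
      rewrite E1, sin_plus, sin_PI2, cos_PI2.
      destruct (sin_nat_PI j) as [S1 S2]. rewrite S1. replace (0 * 0 + cos (INR j * PI) * 1) with (cos (INR j * PI)) by ring. exact S2. }
    pose proof (HN0 (S m') ltac:(unfold m'; lia) (RtoC x) Hz) as C1.
    pose proof (HN0 m' ltac:(unfold m'; lia) (RtoC x) Hz) as C2.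
    cbv beta in C1, C2. fold n in C1. fold n' in C2. rewrite Zn in C1.
    pose proof (chordal_contra _ _ C1 C2). lra.
Qed.
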